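(* Let $\boldsymbol\alpha\in\mathbb C^d$. If the Zariski closure of the equivalence class $[\boldsymbol\alpha]$ is all of $\mathbb C^d$, then $\mathbb R_{>0}(\boldsymbol\alpha)$ is nonempty.
   Context: $A\subset\mathbb Z^d$ is a finite set generating the group $\mathbb Z^d$; $\mathbb NA$ its monoid. For a face $\tau$ of the cone $\mathbb R_{\ge0}A$ and $\boldsymbol\alpha\in\mathbb C^d$, $E_\tau(\boldsymbol\alpha)=\{\boldsymbol\lambda\in\mathbb C(A\cap\tau)/\mathbb Z(A\cap\tau):\boldsymbol\alpha-\boldsymbol\lambda\in\mathbb NA+\mathbb Z(A\cap\tau)\}$; $\boldsymbol\alpha\sim\boldsymbol\beta$ iff $E_\tau(\boldsymbol\alpha)=E_\tau(\boldsymbol\beta)$ for all faces $\tau$, and $[\boldsymbol\alpha]\subseteq\mathbb C^d$ is the equivalence class of $\boldsymbol\alpha$. For a facet $\sigma$, $F_\sigma$ is the unique linear form (extended $\mathbb C$-linearly) with $F_\sigma(\mathbb R_{\ge0}A)\ge0$, $F_\sigma(\sigma)=0$, $F_\sigma(\mathbb Z^d)=\mathbb Z$. $\mathcal F_+(\boldsymbol\alpha)=\{\sigma:F_\sigma(\boldsymbol\alpha)\in F_\sigma(\mathbb NA)\}$, $\mathcal F_-(\boldsymbol\alpha)=\{\sigma:F_\sigma(\boldsymbol\alpha)\in\mathbb Z\setminus F_\sigma(\mathbb NA)\}$, and $\mathbb R_{>0}(\boldsymbol\alpha)=\{\boldsymbol\gamma\in\mathbb R^d:F_\sigma(\boldsymbol\gamma)>0\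 (\sigma\in\mathcal F_+(\boldsymbol\alpha)),\ F_\sigma(\boldsymbol\gamma)<0\ (\sigma\in\mathcal F_-(\boldsymbol\alpha))\}$. *)

(* Defs.v *)
From HB Require Import structures.
From mathcomp Require Import all_boot all_order all_algebra.
From mathcomp Require Import reals complex.
From mathcomp Require mpoly.

Set Implicit Arguments.
Unset Strict Implicit.
Unset Printing Implicit Defensive.

Import Order.TTheory GRing.Theory Num.Theory.
Local Open Scope ring_scope.
Local Open Scope complex_scope.

Section Defs.
Variables (R : realType) (d : nat) (A : seq 'rV[int]_d).

Local Notation C := (R[i]).

Definition vecR (a : 'rV[int]_d) : 'rV[R]_d := map_mx (fun z : int => z%:~R) a.
Definition vecC (a : 'rV[int]_d) : 'rV[C]_d := map_mx (fun z : int => z%:~R) a.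

Definition linR (f x : 'rV[R]_d) : R := \sum_(i < d) f 0 i * x 0 i.
Definition linC (f : 'rV[R]_d) (x : 'rV[C]_d) : C := \sum_(i < d) (f 0 i)%:C * x 0 i.

Definition generates_Zd : Prop :=
  forall z : 'rV[int]_d, exists c : 'I_(size A) -> int,
    z = \sum_(i < size A) c i *: A`_i.

Definition cone (x : 'rV[R]_d) : Prop :=
  exists c : 'I_(size A) -> R, (forall i, 0 <= c i) /\
    x = \sum_(i < size A) c i *: vecR A`_i.

Definition is_face (tau : 'rV[R]_d -> Prop) : Prop :=
  exists f : 'rV[R]_d, (forall x, cone x -> 0 <= linR f x) /\
    (forall x, tau x <-> (cone x /\ linR f x = 0)).

(* facets: faces whose linear span has dimension d - 1 *)
Definition is_facet (sigma : 'rV[R]_d -> Prop) : Prop :=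
  is_face sigma /\
  (exists m (M : 'M[R]_(m, d)), (forall i, sigma (row i M)) /\ (\rank M).+1 = d) /\
  (forall m (M : 'M[R]_(m, d)), (forall i, sigma (row i M)) -> ((\rank M).+1 <= d)%N).

(* f is (the coefficient vector of) the primitive form F_sigma of the facet sigma *)
Definition is_Fsigma (sigma : 'rV[R]_d -> Prop) (f : 'rV[R]_d) : Prop :=
  (forall x, cone x -> 0 <= linR f x) /\
  (forall x, sigma x -> linR f x = 0) /\
  (forall r : R, (exists z : 'rV[int]_d, linR f (vecR z) = r) <->
                 (exists n : int, r = n%:~R)).

Definition in_NA (z : 'rV[int]_d) : Prop :=
  exists c : 'I_(size A) -> nat, z = \sum_(i < size A) (c i)%:R *: A`_i.

Definition in_Cspan (tau : 'rV[R]_d -> Prop) (l : 'rV[C]_d) : Prop :=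
  exists c : 'I_(size A) -> C, (forall i : 'I_(size A), ~ tau (vecR A`_i) -> c i = 0) /\
    l = \sum_(i < size A) c i *: vecC A`_i.

Definition in_NA_plus_Ztau (tau : 'rV[R]_d -> Prop) (v : 'rV[C]_d) : Prop :=
  exists (c : 'I_(size A) -> nat) (e : 'I_(size A) -> int),
    (forall i : 'I_(size A), ~ tau (vecR A`_i) -> e i = 0) /\
    v = \sum_(i < size A) ((c i)%:R + (e i)%:~R) *: vecC A`_i.

(* E_tau(alpha), represented by its (Z(A cap tau)-stable) preimage in C(A cap tau) *)
Definition E_tau (tau : 'rV[R]_d -> Prop) (alpha : 'rV[C]_d) (l : 'rV[C]_d) : Prop :=
  in_Cspan tau l /\ in_NA_plus_Ztau tau (alpha - l).

Definition equiv_alpha (alpha beta : 'rV[C]_d) : Prop :=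
  forall tau, is_face tau -> forall l, E_tau tau alpha l <-> E_tau tau beta l.

Definition eq_class (alpha : 'rV[C]_d) (beta : 'rV[C]_d) : Prop := equiv_alpha alpha beta.

Definition zariski_closure (S : 'rV[C]_d -> Prop) (x : 'rV[C]_d) : Prop :=
  forall p : mpoly.mpoly d C,
    (forall y, S y -> mpoly.meval (fun i => y 0 i) p = 0) ->
    mpoly.meval (fun i => x 0 i) p = 0.

Definition in_Fplus (f : 'rV[R]_d) (alpha : 'rV[C]_d) : Prop :=
  exists z, in_NA z /\ linC f alpha = (linR f (vecR z))%:C.

Definition in_Fminus (f : 'rV[R]_d) (alpha : 'rV[C]_d) : Prop :=
  (exists n : int, linC f alpha = n%:~R) /\
  ~ (exists z, in_NA z /\ linC f alpha = (linR f (vecR z))%:C).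

Definition Rpos (alpha : 'rV[C]_d) (g : 'rV[R]_d) : Prop :=
  forall sigma f, is_facet sigma -> is_Fsigma sigma f ->
    (in_Fplus f alpha -> 0 < linR f g) /\ (in_Fminus f alpha -> linR f g < 0).

End Defs.

(* Main.v *)
Require Import Defs.
From HB Require Import structures.
From mathcomp Require Import all_boot all_order all_algebra.
From mathcomp Require Import reals complex.
From mathcomp Require Import zify ring lra.
From Stdlib Require Import Classical.
From mathcomp Require Import mpoly.

Set Implicit Arguments.
Unset Strict Implicit.
Unset Printing Implicit Defensive.
Import Order.TTheory GRing.Theory Num.Theory.
Local Open Scope ring_scope.
Local Open Scope complex_scope.

Lemma natdiv_aux (p m : nat) : (p * p <= m)%N -> ((m %/ p - m %% p) * p + m %% p * p.+1)%N = m.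
Proof.
case: p => [|p] H; first by rewrite divn0 modn0 /=; lia.
have := divn_eq m p.+1; have := ltn_pmod m (ltn0Sn p).
have : (p.+1 <= m %/ p.+1)%N by rewrite leq_divRL //.
nia.
Qed.

Lemma intr_split (S : pzRingType) (k : int) : (k%:~R : S) = (if (0 <= k) then `|k|%N else 0%N)%:R - (if (0 <= k) then 0%N else `|k|%N)%:R.
Proof. case: k => k /=; first by rewrite subr0. by rewrite sub0r NegzE mulrNz. Qed.

Section Aux.
Variables (R : realType) (d : nat) (A : seq 'rV[int]_d).
Local Notation C := (R[i]).
Implicit Types (f x y : 'rV[R]_d) (a b : 'rV[int]_d).
Local Notation n := (size A).
Local Notation vR := (@vecR R d).
Local Notation vC := (@vecC R d).

Lemma linRE (f x : 'rV[R]_d) : linR f x = (x *m f^T) 0 0.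
Proof. by rewrite /linR !mxE; apply: eq_bigr => i _; rewrite mxE mulrC. Qed.

Lemma linRD f x y : linR f (x + y) = linR f x + linR f y.
Proof. by rewrite !linRE mulmxDl mxE. Qed.

Lemma linRZ f (k : R) x : linR f (k *: x) = k * linR f x.
Proof. by rewrite !linRE -scalemxAl mxE. Qed.

Lemma linR0 f : linR f 0 = 0.
Proof. by rewrite linRE mul0mx mxE. Qed.

Lemma linRN f x : linR f (- x) = - linR f x.
Proof. by rewrite !linRE mulNmx mxE. Qed.

Lemma linR_sum I (r : seq I) (P : pred I) f (F : I -> 'rV[R]_d) :
  linR f (\sum_(i <- r | P i) F i) = \sum_(i <- r | P i) linR f (F i).
Proof.
elim/big_rec2: _ => [|i y x _ <-]; first exact: linR0.
by rewrite linRD.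
Qed.

Lemma vecRD a b : vR (a + b) = vR a + vR b :> 'rV[R]_d.
Proof. by apply/rowP => j; rewrite !mxE intrD. Qed.

Lemma vecR0 : vR 0 = 0 :> 'rV[R]_d.
Proof. by apply/rowP => j; rewrite !mxE. Qed.

Lemma vecRZ (c : int) a : vR (c *: a) = c%:~R *: vR a :> 'rV[R]_d.
Proof. by apply/rowP => j; rewrite !mxE intrM. Qed.

Lemma vecR_sum I (r : seq I) (P : pred I) (F : I -> 'rV[int]_d) :
  vR (\sum_(i <- r | P i) F i) = \sum_(i <- r | P i) vR (F i) :> 'rV[R]_d.
Proof.
elim/big_rec2: _ => [|i y x _ <-]; first exact: vecR0.
by rewrite vecRD.
Qed.

Lemma linC_vecC f a : linC f (vC a) = (linR f (vR a))%:C :> C.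
Proof.
rewrite /linC /linR rmorph_sum; apply: eq_bigr => i _.
by rewrite !mxE rmorphM /= rmorph_int.
Qed.


Lemma linR0l x : linR 0 x = 0.
Proof. by rewrite /linR big1 // => i _; rewrite mxE mul0r. Qed.

Lemma cone_A (i : 'I_n) : cone A (vR A`_i).
Proof.
exists (fun j => (j == i)%:R); split=> [j|]; first by rewrite ler0n.
rewrite (bigD1 i) //= eqxx scale1r big1 ?addr0 // => j /negbTE ->.
by rewrite scale0r.
Qed.

Lemma Fsigma_neq0 sigma f : is_Fsigma A sigma f -> f != 0.
Proof.
move=> [_ [_ Hint]].
have [z Hz] : exists z, linR f (vR z) = 1 by apply/(Hint 1); exists 1.
by apply/eqP => f0; move: Hz; rewrite f0 linR0l => /eqP; rewrite eq_sym oner_eq0.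
Qed.

Lemma facet_span sigma f : is_facet A sigma -> is_Fsigma A sigma f ->
  forall x, linR f x = 0 -> exists r : 'I_n -> R,
   (forall i : 'I_n, ~ sigma (vR A`_i) -> r i = 0) /\ x = \sum_(i < n) r i *: vR A`_i.
Proof.
move=> [[f0 [Hf0 Hs]] [[m [M [HM Hrk]]] _]] HF x Hx.
have fn0 := Fsigma_neq0 HF.
move: HF => [Hpos [Hz Hint]].
pose B : 'M[R]_(n, d) := \matrix_(i < n) ((linR f0 (vR A`_i) == 0)%:R *: vR A`_i).
have MB : (M <= B)%MS.
  apply/row_subP => k.
  have [[c [c0 Hc]] Hk0] := (Hs (row k M)).1 (HM k).
  have Hc0 : forall i, c i * linR f0 (vR A`_i) = 0.
    move: Hk0; rewrite Hc linR_sum.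
    under eq_bigr do rewrite linRZ.
    move/psumr_eq0P => H i; apply: H => // j _.
    exact: mulr_ge0 (c0 j) (Hf0 _ (cone_A j)).
  have -> : row k M = (\row_i c i) *m B.
    rewrite mulmx_sum_row Hc; apply: eq_bigr => i _; rewrite rowK mxE scalerA.
    case: eqP => [_|H]; first by rewrite mulr1.
    have := Hc0 i; move/eqP; rewrite mulf_eq0 => /orP [/eqP ->|/eqP //].
    by rewrite !mul0r !scale0r.
  exact: submxMl.
have MK : (M <= kermx f^T)%MS.
  apply/sub_kermxP; apply/matrixP => k j.
  rewrite ord1 [RHS]mxE.
  transitivity ((row k (M *m f^T)) 0 0); first by rewrite [RHS]mxE.
  by rewrite row_mul -linRE Hz.
have rkK : \rank (kermx f^T) = \rank M.
  by rewrite mxrank_ker mxrank_tr rank_rV fn0; lia.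
have KM : (kermx f^T <= M)%MS.
  have := (mxrank_leqif_eq MK).2; rewrite rkK eqxx => /esym /andP [].
  by [].
have xK : (x <= kermx f^T)%MS.
  rewrite sub_kermx; apply/eqP/matrixP => i j.
  by rewrite !ord1 [RHS]mxE -linRE Hx.
have xB : (x <= B)%MS := submx_trans xK (submx_trans KM MB).
exists (fun i => (x *m pinvmx B) 0 i * (linR f0 (vR A`_i) == 0)%:R); split.
  move=> i Hn; case: eqP => H; last by rewrite mulr0.
  by exfalso; apply: Hn; apply/(Hs _).2; split; [exact: cone_A | exact: H].
rewrite -{1}(mulmxKpV xB) mulmx_sum_row; apply: eq_bigr => i _.
by rewrite rowK scalerA.
Qed.


Definition reV (v : 'rV[C]_d) : 'rV[R]_d := map_mx (@complex.Re R) v.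
Definition imV (v : 'rV[C]_d) : 'rV[R]_d := map_mx (@complex.Im R) v.

Lemma Re_sum I (r : seq I) (P : pred I) (F : I -> C) :
  complex.Re (\sum_(i <- r | P i) F i) = \sum_(i <- r | P i) complex.Re (F i).
Proof.
elim/big_rec2: _ => [//|i y x _ <-].
by case: (F i) => a b; case: x => c e.
Qed.

Lemma Im_sum I (r : seq I) (P : pred I) (F : I -> C) :
  complex.Im (\sum_(i <- r | P i) F i) = \sum_(i <- r | P i) complex.Im (F i).
Proof.
elim/big_rec2: _ => [//|i y x _ <-].
by case: (F i) => a b; case: x => c e.
Qed.

Lemma linC_Re f v : complex.Re (linC f v) = linR f (reV v).
Proof.
rewrite /linC Re_sum; apply: eq_bigr => i _; rewrite mxE.
by case: (v 0 i) => a b /=; rewrite mul0r subr0.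
Qed.

Lemma linC_Im f v : complex.Im (linC f v) = linR f (imV v).
Proof.
rewrite /linC Im_sum; apply: eq_bigr => i _; rewrite mxE.
by case: (v 0 i) => a b /=; rewrite mul0r addr0.
Qed.

Lemma facet_Cspan sigma f v : is_facet A sigma -> is_Fsigma A sigma f ->
  linC f v = 0 -> in_Cspan A sigma v.
Proof.
move=> Hf HF Hv.
have [r [Hr0 Hr]] := facet_span Hf HF (x := reV v) (ltac:(by rewrite -linC_Re Hv)).
have [s [Hs0 Hs]] := facet_span Hf HF (x := imV v) (ltac:(by rewrite -linC_Im Hv)).
exists (fun i => (r i)%:C + 'i%C * (s i)%:C); split.
  by move=> i Hn; rewrite Hr0 // Hs0 // mulr0 addr0.
apply/rowP => j; rewrite [LHS]complexE.
have -> : complex.Re (v 0 j) = reV v 0 j by rewrite mxE.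
have -> : complex.Im (v 0 j) = imV v 0 j by rewrite mxE.
rewrite Hr Hs !summxE !rmorph_sum mulr_sumr -big_split /=.
apply: eq_bigr => i _; rewrite !mxE !rmorphM /= rmorph_int.
by rewrite mulrDl mulrA.
Qed.


Lemma intrn (S : pzRingType) (k : nat) : ((k%:R : int)%:~R : S) = k%:R.
Proof. by rewrite natz. Qed.

Lemma linCE f (v : 'rV[C]_d) : linC f v = (v *m (map_mx (real_complex R) f)^T) 0 0.
Proof. by rewrite /linC !mxE; apply: eq_bigr => i _; rewrite !mxE mulrC. Qed.

Lemma linCD f (v w : 'rV[C]_d) : linC f (v + w) = linC f v + linC f w.
Proof. by rewrite !linCE mulmxDl mxE. Qed.

Lemma linCZ f (k : C) (v : 'rV[C]_d) : linC f (k *: v) = k * linC f v.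
Proof. by rewrite !linCE -scalemxAl mxE. Qed.

Lemma linC0 f : linC f 0 = 0.
Proof. by rewrite linCE mul0mx mxE. Qed.

Lemma linCN f (v : 'rV[C]_d) : linC f (- v) = - linC f v.
Proof. by rewrite !linCE mulNmx mxE. Qed.

Lemma linCB f (v w : 'rV[C]_d) : linC f (v - w) = linC f v - linC f w.
Proof. by rewrite linCD linCN. Qed.

Lemma linC_sum I (r : seq I) (P : pred I) f (F : I -> 'rV[C]_d) :
  linC f (\sum_(i <- r | P i) F i) = \sum_(i <- r | P i) linC f (F i).
Proof.
elim/big_rec2: _ => [|i y x _ <-]; first exact: linC0.
by rewrite linCD.
Qed.

Lemma vecCD a b : vC (a + b) = vC a + vC b.
Proof. by apply/rowP => j; rewrite !mxE intrD. Qed.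

Lemma vecC0 : vC 0 = 0.
Proof. by apply/rowP => j; rewrite !mxE. Qed.

Lemma vecCZ (c : int) a : vC (c *: a) = c%:~R *: vC a.
Proof. by apply/rowP => j; rewrite !mxE intrM. Qed.

Lemma vecC_sum I (r : seq I) (P : pred I) (F : I -> 'rV[int]_d) :
  vC (\sum_(i <- r | P i) F i) = \sum_(i <- r | P i) vC (F i).
Proof.
elim/big_rec2: _ => [|i y x _ <-]; first exact: vecC0.
by rewrite vecCD.
Qed.

Lemma linC_comb f (k : 'I_n -> C) :
  linC f (\sum_(i < n) k i *: vC A`_i) = \sum_(i < n) k i * (linR f (vR A`_i))%:C.
Proof. by rewrite linC_sum; apply: eq_bigr => i _; rewrite linCZ linC_vecC. Qed.

Lemma linR_NA f (c : 'I_n -> nat) :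
  linR f (vR (\sum_(i < n) (c i)%:R *: A`_i)) = \sum_(i < n) (c i)%:R * linR f (vR A`_i).
Proof.
by rewrite vecR_sum linR_sum; apply: eq_bigr => i _; rewrite vecRZ linRZ intrn.
Qed.

Lemma vecC_NA (c : 'I_n -> nat) :
  vC (\sum_(i < n) (c i)%:R *: A`_i) = \sum_(i < n) (c i)%:R *: vC A`_i.
Proof. by rewrite vecC_sum; apply: eq_bigr => i _; rewrite vecCZ intrn. Qed.

Lemma Fplus_E sigma f alpha : is_facet A sigma -> is_Fsigma A sigma f ->
  in_Fplus A f alpha -> exists l, E_tau A sigma alpha l.
Proof.
move=> Hf HF [z [[c Hc] Hz]].
exists (alpha - vC z); split.
  apply: (facet_Cspan Hf HF).
  by rewrite linCB linC_vecC Hz subrr.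
exists c, (fun _ => 0); split => //.
rewrite opprB addrC subrK Hc vecC_NA.
by apply: eq_bigr => i _; rewrite addr0.
Qed.

Lemma E_Fplus sigma f beta l : is_Fsigma A sigma f ->
  E_tau A sigma beta l -> in_Fplus A f beta.
Proof.
move=> [Hpos [Hz Hint]] [[c [c0 Hl]] [c' [e [e0 Hb]]]].
exists (\sum_(i < n) (c' i)%:R *: A`_i); split; first by exists c'.
have -> : beta = (beta - l) + l by rewrite subrK.
rewrite linCD Hb Hl !linC_comb linR_NA rmorph_sum -[RHS]addr0.
congr (_ + _).
  apply: eq_bigr => i _; rewrite mulrDl rmorphM /= rmorph_nat.
  case: (classic (sigma (vR A`_i))) => H.
    have F0 : (linR f (vR A`_i))%:C = 0 :> C by rewrite Hz.
    by rewrite F0 !mulr0 addr0.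
  by rewrite (e0 i H) mul0r addr0.
apply: big1 => i _.
case: (classic (sigma (vR A`_i))) => H.
  have F0 : (linR f (vR A`_i))%:C = 0 :> C by rewrite Hz.
  by rewrite F0 mulr0.
by rewrite (c0 i H) mul0r.
Qed.


Lemma Fsigma_int sigma f a : is_Fsigma A sigma f -> exists k : int, linR f (vR a) = k%:~R.
Proof. by move=> [_ [_ Hint]]; apply/(Hint _).1; exists a. Qed.

Lemma Fsigma_nat sigma f (i : 'I_n) : is_Fsigma A sigma f ->
  exists k : nat, linR f (vR A`_i) = k%:R.
Proof.
move=> HF; have [k Hk] := Fsigma_int A`_i HF.
have k0 : 0 <= k.
  by rewrite -(ler0z R) -Hk; case: HF => Hpos _; apply: Hpos; apply: cone_A.
by exists `|k|%N; rewrite Hk; case: k k0 Hk => // k _ _; rewrite /=.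
Qed.

Lemma cofinite sigma f : generates_Zd A -> is_Fsigma A sigma f ->
  exists K : nat, forall m : nat, (K <= m)%N ->
    exists z, in_NA A z /\ linR f (vR z) = m%:R.
Proof.
move=> hA HF.
have [a Ha] := fin_all_exists (fun i => Fsigma_nat i HF).
have [z1 Hz1] : exists z, linR f (vR z) = 1.
  by case: HF => _ [_ Hint]; apply/(Hint 1); exists 1.
have [e He] := hA z1.
pose P i := (if (0 <= e i) then `|e i|%N else 0%N).
pose N i := (if (0 <= e i) then 0%N else `|e i|%N).
pose p := (\sum_(i < n) N i * a i)%N.
pose q := (\sum_(i < n) P i * a i)%N.
have Hq : q = p.+1.
  suff H : q%:R - p%:R = 1 :> R.
    by apply/eqP; rewrite -(eqr_nat R) -addn1 natrD mulr1n addrC -subr_eq H.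
  rewrite /q /p !natr_sum -sumrB -[RHS]Hz1 He vecR_sum linR_sum.
  apply: eq_bigr => i _; rewrite vecRZ linRZ Ha intr_split !natrM -mulrBl //.
exists (p * p)%N => m Hm.
pose c i := ((m %/ p - m %% p) * N i + m %% p * P i)%N.
exists (\sum_(i < n) (c i)%:R *: A`_i); split; first by exists c.
rewrite linR_NA; under eq_bigr do rewrite Ha -natrM.
rewrite -natr_sum; congr (_%:R).
rewrite -[in RHS](natdiv_aux Hm) -Hq /p /q !big_distrr -big_split /=.
by apply: eq_bigr => i _; rewrite /c mulnDl !mulnA.
Qed.


Lemma int_ge1 (x : R) (k : int) : x = k%:~R -> 0 < x -> 1 <= x.
Proof. by move=> ->; rewrite ltr0z ler1z; lia. Qed.

Lemma linR_delta f (j : 'I_d) : linR f (delta_mx 0 j) = f 0 j.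
Proof.
rewrite /linR (bigD1 j) //= big1 ?addr0; first by rewrite mxE !eqxx mulr1.
by move=> i /negbTE Hi; rewrite mxE Hi andbF mulr0.
Qed.

Lemma row_eq_linR f f' : (forall y, linR f y = linR f' y) -> f = f'.
Proof. by move=> H; apply/rowP => j; rewrite -!linR_delta H. Qed.

Lemma ker_sub sigma f f' : is_facet A sigma -> is_Fsigma A sigma f ->
  (forall i : 'I_n, linR f (vR A`_i) = 0 -> linR f' (vR A`_i) = 0) ->
  forall x, linR f x = 0 -> linR f' x = 0.
Proof.
move=> Hf HF Hi x Hx.
have [r [Hr0 ->]] := facet_span Hf HF Hx.
rewrite linR_sum big1 // => i _; rewrite linRZ.
case: (classic (sigma (vR A`_i))) => H.
  by rewrite Hi ?mulr0 //; case: HF => _ [Hz _]; apply: Hz.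
by rewrite Hr0 // mul0r.
Qed.

Lemma prop_form sigma f f' z : is_facet A sigma -> is_Fsigma A sigma f ->
  (forall i : 'I_n, linR f (vR A`_i) = 0 -> linR f' (vR A`_i) = 0) ->
  linR f z = 1 -> forall y, linR f' y = linR f y * linR f' z.
Proof.
move=> Hf HF Hi Hz y.
have := ker_sub Hf HF Hi (x := y - linR f y *: z).
rewrite linRD linRN linRZ Hz mulr1 subrr => /(_ erefl).
by rewrite linRD linRN linRZ => /eqP; rewrite subr_eq0 => /eqP.
Qed.

Lemma facet_unique sigma f sigma' f' : generates_Zd A ->
  is_facet A sigma -> is_Fsigma A sigma f ->
  is_facet A sigma' -> is_Fsigma A sigma' f' ->
  (forall i : 'I_n, (linR f (vR A`_i) == 0) = (linR f' (vR A`_i) == 0)) -> f = f'.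
Proof.
move=> hA Hf HF Hf' HF' Heq.
have [z Hz] : exists z, linR f (vR z) = 1.
  by case: HF => _ [_ Hint]; apply/(Hint 1); exists 1.
have [z' Hz'] : exists z, linR f' (vR z) = 1.
  by case: HF' => _ [_ Hint]; apply/(Hint 1); exists 1.
have Hi : forall i : 'I_n, linR f (vR A`_i) = 0 -> linR f' (vR A`_i) = 0.
  by move=> i /eqP; rewrite Heq => /eqP.
have H1 := prop_form Hf HF Hi Hz.
set c := linR f' (vR z) in H1.
have [k Hk] := Fsigma_int z HF'.
have [k' Hk'] := Fsigma_int z' HF.
have cc' : linR f (vR z') * c = 1 by rewrite -H1.
have [i Hi0] : exists i : 'I_n, linR f (vR A`_i) != 0.
  case: (classic (exists i : 'I_n, linR f (vR A`_i) != 0)) => // Hn.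
  have [e He] := hA z.
  move: Hz; rewrite He vecR_sum linR_sum big1 => [/eqP|j _].
    by rewrite eq_sym oner_eq0.
  rewrite vecRZ linRZ.
  case: (eqVneq (linR f (vR A`_j)) 0) => [->|Hj]; first by rewrite mulr0.
  by exfalso; apply: Hn; exists j.
have pos : 0 < linR f (vR A`_i).
  rewrite lt0r Hi0 /=; case: HF => Hpos _; apply: Hpos; exact: cone_A.
have c0 : 0 <= c.
  have : 0 <= linR f' (vR A`_i) by case: HF' => Hpos _; apply: Hpos; exact: cone_A.
  by rewrite H1 pmulr_rge0.
have cpos : 0 < c.
  rewrite lt0r c0 andbT; apply/eqP => c00; move: cc'; rewrite c00 mulr0 => /eqP.
  by rewrite eq_sym oner_eq0.
have c1 : 1 <= c by apply: int_ge1 Hk cpos.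
have c'pos : 0 < linR f (vR z').
  by rewrite -(pmulr_lgt0 _ cpos) cc'.
have c'1 : 1 <= linR f (vR z') by apply: int_ge1 Hk' c'pos.
have ceq : c = 1 by nra.
apply: row_eq_linR => y; by rewrite H1 ceq mulr1.
Qed.


Definition goodFK f (K : nat) :=
  (exists sigma, is_facet A sigma /\ is_Fsigma A sigma f) /\
  (forall m : nat, (K <= m)%N -> exists z, in_NA A z /\ linR f (vR z) = m%:R).

Definition key f : {set 'I_n} := [set i : 'I_n | linR f (vR A`_i) == 0].

Lemma facet_list : generates_Zd A -> exists L : seq ('rV[R]_d * nat),
  (forall p, p \in L -> goodFK p.1 p.2) /\
  (forall sigma f, is_facet A sigma -> is_Fsigma A sigma f -> exists K, (f, K) \in L).
Proof.
move=> hA.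
suff H : forall s : seq {set 'I_n}, exists L : seq ('rV[R]_d * nat),
  (forall p, p \in L -> goodFK p.1 p.2) /\
  (forall sigma f, is_facet A sigma -> is_Fsigma A sigma f -> key f \in s ->
     exists K, (f, K) \in L).
  have [L [H1 H2]] := H (enum {set 'I_n}).
  by exists L; split => // sigma f Hs Hf; apply: H2 Hs Hf _; rewrite mem_enum.
elim => [|S s [L [IH1 IH2]]]; first by exists [::].
case: (classic (exists sigma f, is_facet A sigma /\ is_Fsigma A sigma f /\ key f = S)).
  move=> [s0 [f0 [Hs0 [Hf0 Hk0]]]].
  have [K0 HK0] := cofinite hA Hf0.
  exists ((f0, K0) :: L); split.
    move=> p; rewrite inE => /orP [/eqP -> |]; last exact: IH1.
    by split => //; exists s0.
  move=> sigma f Hs Hf; rewrite inE => /orP [/eqP Hk|Hin].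
    exists K0; rewrite inE; apply/orP; left.
    have -> // : f = f0.
    apply: (facet_unique hA Hs Hf Hs0 Hf0) => i.
    have : (i \in key f) = (i \in key f0) by rewrite Hk Hk0.
    by rewrite !inE.
  have [K HK] := IH2 sigma f Hs Hf Hin.
  by exists K; rewrite inE HK orbT.
move=> Hn; exists L; split => // sigma f Hs Hf; rewrite inE => /orP [/eqP Hk|Hin].
  by exfalso; apply: Hn; exists sigma, f.
exact: IH2 Hs Hf Hin.
Qed.


Lemma Cspan_all (hA : generates_Zd A) (alpha : 'rV[C]_d) :
  exists c : 'I_n -> C, alpha = \sum_(i < n) c i *: vC A`_i.
Proof.
have [E HE] := fin_all_exists (fun j : 'I_d => hA (delta_mx 0 j)).
exists (fun i => \sum_(j < d) alpha 0 j * (E j i)%:~R).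
rewrite [LHS]row_sum_delta.
under eq_bigr => j _.
  have -> : delta_mx 0 j = vC (delta_mx 0 j) :> 'rV[C]_d.
    by apply/rowP => k; rewrite !mxE; case: (_ && _).
  rewrite HE vecC_sum scaler_sumr.
  under eq_bigr do rewrite vecCZ scalerA.
  over.
rewrite exchange_big /=; apply: eq_bigr => i _.
by rewrite scaler_suml.
Qed.

Lemma class_shift (hA : generates_Zd A) (alpha beta : 'rV[C]_d) :
  eq_class A alpha beta ->
  exists k : 'I_n -> int, beta - alpha = \sum_(i < n) (k i)%:~R *: vC A`_i.
Proof.
move=> Heq.
pose tau := fun x => cone A x /\ linR 0 x = 0.
have Ht : is_face A tau by exists 0; split => // x _; rewrite linR0l.
have HE : E_tau A tau alpha alpha.
  split.
    have [c Hc] := Cspan_all hA alpha.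
    exists c; split => // i Hn; exfalso; apply: Hn; split; first exact: cone_A.
    exact: linR0l.
  exists (fun _ => 0%N), (fun _ => 0); split => //.
  by rewrite subrr big1 // => i _; rewrite addr0 scale0r.
have [_ [c [e [_ Hb]]]] := (Heq tau Ht alpha).1 HE.
exists (fun i => (c i)%:Z + e i); rewrite Hb; apply: eq_bigr => i _.
by rewrite intrD.
Qed.


Lemma NA_cone z : in_NA A z -> cone A (vR z).
Proof.
move=> [c ->]; exists (fun i => (c i)%:R); split => [i|]; first exact: ler0n.
by rewrite vecR_sum; apply: eq_bigr => i _; rewrite vecRZ intrn.
Qed.

Lemma nonzero_coord f : f != 0 -> exists j, f 0 j != 0.
Proof.
move=> fn0; case: (classic (exists j, f 0 j != 0)) => // Hn.
exfalso; move/eqP: fn0; apply; apply/rowP => j; rewrite mxE.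
by case: (eqVneq (f 0 j) 0) => // Hj; exfalso; apply: Hn; exists j.
Qed.

End Aux.

Theorem proposition8p16 (R : realType) (d : nat) (A : seq 'rV[int]_d)
  (hA : generates_Zd A) (alpha : 'rV[R[i]]_d) :
  (forall x, zariski_closure (eq_class A alpha) x) ->
  exists g : 'rV[R]_d, Rpos A alpha g.
Proof.
move=> HZ.
have [L [HL1 HL2]] := facet_list R hA.
pose fac (p : 'rV[R]_d * nat) (k : nat) : {mpoly R[i][d]} :=
  \sum_(j < d) ((p.1 0 j)%:C : R[i]) *: 'X_j - (k%:R : R[i])%:MP.
pose P := \prod_(p <- L) \prod_(k < p.2.+1) fac p k.
have evalP : forall y : 'rV[R[i]]_d, meval (fun i => y 0 i) P =
    \prod_(p <- L) \prod_(k < p.2.+1) (linC p.1 y - k%:R).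
  move=> y; rewrite /P rmorph_prod; apply: eq_bigr => p _.
  rewrite rmorph_prod; apply: eq_bigr => k _.
  rewrite /fac raddfB raddf_sum /= mevalC /linC; congr (_ - _).
  by apply: eq_bigr => j _; rewrite mevalZ mevalXU.
have [x0 Hx0] : exists x0 : 'rV[R[i]]_d, meval (fun i => x0 0 i) P != 0.
  pose Q (p : 'rV[R]_d * nat) (k : nat) : {poly R[i]} :=
    \sum_(j < d) ((p.1 0 j)%:C : R[i]) *: 'X^(j.+1) - (k%:R : R[i])%:P.
  have Qn0 : forall p k, p \in L -> Q p k != 0.
    move=> p k /HL1 [[s [Hs HF]] _].
    have [j Hj] := nonzero_coord (Fsigma_neq0 HF).
    apply/eqP => HQ; move/eqP: Hj; apply.
    have := congr1 (fun q : {poly R[i]} => q`_j.+1) HQ.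
    rewrite /Q coefB coef_sum coefC /= coef0 subr0 (bigD1 j) //= coefZ coefXn eqxx mulr1 big1 ?addr0.
      by case.
    move=> i /negbTE Hi; rewrite coefZ coefXn eqSS; case: eqP => [/val_inj Eij|_]; last by rewrite mulr0.
    by move: Hi; rewrite Eij eqxx.
  have : \prod_(p <- L) \prod_(k < p.2.+1) Q p k != 0.
    rewrite prodf_seq_neq0; apply/allP => p Hp; apply/implyP => _.
    rewrite prodf_seq_neq0; apply/allP => k _; apply/implyP => _; exact: Qn0.
  move/closed_nonrootP => [t Ht].
  have E : forall p k, (Q p k).[t] = linC p.1 (\row_j t ^+ j.+1) - k%:R.
    move=> p k; rewrite /Q hornerD hornerN hornerC horner_sum /linC; congr (_ - _).
    by apply: eq_bigr => j _; rewrite hornerZ hornerXn mxE.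
  exists (\row_j (t ^+ j.+1)); rewrite evalP.
  move: Ht; rewrite /root horner_prod.
  under eq_bigr => p _ do rewrite horner_prod.
  under eq_bigr => p _ do under eq_bigr => k _ do rewrite E.
  by [].
have [beta [Hb Hbn]] : exists beta, eq_class A alpha beta /\
    meval (fun i => beta 0 i) P != 0.
  case: (classic (exists beta, eq_class A alpha beta /\
    meval (fun i => beta 0 i) P != 0)) => // Hn.
  exfalso; move/eqP: Hx0; apply; apply: (HZ x0 P) => y Hy.
  case: (eqVneq (meval (fun i => y 0 i) P) 0) => // Hne.
  by exfalso; apply: Hn; exists y.
exists (reV beta) => sigma f Hs HF.
have [K HK] := HL2 sigma f Hs HF.
have [_ HKcof] := HL1 _ HK.
have Hav : forall k : nat, (k <= K)%N -> linC f beta != k%:R.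
  move=> k Hk; move: Hbn; rewrite evalP prodf_seq_neq0 => /allP /(_ _ HK) /=.
  rewrite prodf_seq_neq0 => /allP /(_ (Ordinal (n:=K.+1) (m:=k) Hk)).
  by move=> /(_ (mem_index_enum _)) /=; rewrite subr_eq0.
have Hface : is_face A sigma by case: Hs.
split.
  move=> Hp.
  have [l Hl] := Fplus_E Hs HF Hp.
  have := E_Fplus HF ((Hb sigma Hface l).1 Hl) => -[z [Hz Hzb]].
  rewrite -linC_Re Hzb /=.
  have [r Hr] := Fsigma_int z HF.
  have r0 : 0 <= linR f (vecR R z) by case: HF => Hpos _; apply: Hpos; apply: (NA_cone R).
  rewrite lt0r r0 andbT; apply/eqP => r00.
  have := Hav 0%N (leq0n _); rewrite Hzb r00 => /eqP; apply; by [].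
move=> [[m Hm] Hnot].
have [k Hk] := class_shift hA Hb.
have [a Ha] := fin_all_exists (fun i : 'I_(size A) => Fsigma_int (A`_i) HF).
pose M := m + \sum_(i < size A) k i * a i.
have HM : linC f beta = M%:~R.
  have -> : beta = alpha + (beta - alpha) by rewrite addrC subrK.
  rewrite linCD Hk linC_comb Hm /M intrD rmorph_sum; congr (_ + _).
  by apply: eq_bigr => i _; rewrite Ha rmorphM /= rmorph_int.
rewrite -linC_Re HM.
have -> : (M%:~R : R[i]) = (M%:~R : R)%:C by rewrite rmorph_int.
rewrite /= ltrz0; case: (ltP M 0) => // HM0; exfalso.
have [k' Ek'] : exists k' : nat, M = k'%:Z by exists `|M|%N; rewrite gez0_abs.
case: (leqP k' K) => Hk'.
  by move: (Hav k' Hk'); rewrite HM Ek' => /eqP; apply.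
have [z [Hz Hzv]] := HKcof k' (ltnW Hk').
have Hpb : in_Fplus A f beta.
  by exists z; split => //; rewrite Hzv HM Ek' rmorph_nat.
have [l Hl] := Fplus_E Hs HF Hpb.
by apply: Hnot; exact: E_Fplus HF ((Hb sigma Hface l).2 Hl).
Qed.
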